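(* Take $N=1$, $\rho=0.35$, $Q=321$, $A=167$, $B=1.9$, $\alpha_1=0.32$, $\alpha_i=0.36$, $\alpha_2=0.8$, $T_c=0$, $D=0.25$, and any fixed $R>0$. Let $V$ be the piecewise vector field on $\mathbb R^3$ (coordinates $(T_0,T_2,\eta)$) defined below. Then for all sufficiently small $\varepsilon>0$, the system $(\dot T_0,\dot T_2,\dot\eta)=V(T_0,T_2,\eta)$ has an asymptotically stable equilibrium whose $\eta$-coordinate lies in the open interval $(0,\rho)$ (a ''Jormungand'' state: ice line in tropical latitudes, not a snowball state $\eta=0$).
   Context: $p_0(y)=1$, $p_2(y)=\tfrac12(3y^2-1)$. Let $s(y)=s_0+s_2p_2(y)$ with $s_0=1$, $s_2=-0.477$; $q_0=s$, $q_2=s\,p_2$. For $n=0,1$: \[ \overline b_{2n}(\eta)=\alpha_2 s_{2n}-(4n+1)(\alpha_2-\alpha_1)\int_0^\eta q_{2n}(y)\,dy, \] \[ \overline a_{2n}(\eta)=\alpha_2 s_{2n}-(4n+1)\Bigl((\alpha_2-\alpha_i)\int_\eta^\rho q_{2n}(y)\,dy+(\alpha_2-\alpha_1)\int_0^\eta q_{2n}(y)\,dy\Bigr), \] \[ f^{\mp}_0(\eta)=\tfrac1B\bigl(Q(s_0-\overline c_0(\eta))-A\bigr),\qquad f^{\mp}_{2}(\eta)=\frac{Q(s_{2}-\overline c_{2}(\eta))}{B+6D}, \] with $\overline c=\overline a$ for $f^-$ and $\overline c=\overline b$ for $f^+$. The vector fields $V^\pm$ are \[ \dot T_0=-\tfrac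 BR\bigl(T_0-f^\pm_0(\eta)\bigr),\quad \dot T_2=-\tfrac{B+6D}{R}\bigl(T_2-f^\pm_2(\eta)\bigr),\quad \dot\eta=\varepsilon\bigl(T_0+T_2p_2(\eta)-T_c\bigr), \] and $V=V^-$ on $\{\eta<\rho\}$, $V=V^+$ on $\{\eta\ge\rho\}$. (This corresponds to the Jormungand albedo: for $\eta<\rho$, albedo $\alpha_1$ for $y<\eta$, $\alpha_i$ for $\eta<y<\rho$, $\alpha_2$ for $y>\rho$; for $\eta\ge\rho$, albedo $\alpha_1$ for $y<\eta$, $\alpha_2$ for $y>\eta$.) *)

(* Defs.v *)
From Stdlib Require Import Reals Lra.
Open Scope R_scope.

Definition rho : R := 35/100.
Definition Qc : R := 321.
Definition Ac : R := 167.
Definition Bc : R := 19/10.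
Definition alpha1 : R := 32/100.
Definition alphai : R := 36/100.
Definition alpha2 : R := 8/10.
Definition Tc : R := 0.
Definition Dc : R := 25/100.
Definition s0 : R := 1.
Definition s2 : R := -(477/1000).

Definition p2 (y : R) : R := (3 * y ^ 2 - 1) / 2.
Definition s (y : R) : R := s0 + s2 * p2 y.
Definition q0 (y : R) : R := s y.
Definition q2 (y : R) : R := s y * p2 y.

(* Since q0, q2 are polynomials,
   int_a^b q = P(b) - P(a) with the explicit antiderivatives below
   (P0' = q0, P2' = q2, P0(0) = P2(0) = 0):
     int_0^y s      = y + s2 (y^3 - y)/2
     int_0^y s p2   = (y^3 - y)/2 + s2 (9 y^5/5 - 2 y^3 + y)/4          *)
Definition P0 (y : R) : R := y + s2 * (y ^ 3 - y) / 2.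
Definition P2 (y : R) : R := (y ^ 3 - y) / 2 + s2 * (9 * y ^ 5 / 5 - 2 * y ^ 3 + y) / 4.
Definition int_q0 (a b : R) : R := P0 b - P0 a.
Definition int_q2 (a b : R) : R := P2 b - P2 a.

(* bbar_{2n}, abar_{2n} for n = 0 (index 0) and n = 1 (index 2) *)
Definition bbar0 (eta : R) : R := alpha2 * s0 - 1 * (alpha2 - alpha1) * int_q0 0 eta.
Definition bbar2 (eta : R) : R := alpha2 * s2 - 5 * (alpha2 - alpha1) * int_q2 0 eta.
Definition abar0 (eta : R) : R :=
  alpha2 * s0 - 1 * ((alpha2 - alphai) * int_q0 eta rho + (alpha2 - alpha1) * int_q0 0 eta).
Definition abar2 (eta : R) : R :=
  alpha2 * s2 - 5 * ((alpha2 - alphai) * int_q2 eta rho + (alpha2 - alpha1) * int_q2 0 eta).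

Definition fm0 (eta : R) : R := / Bc * (Qc * (s0 - abar0 eta) - Ac).
Definition fm2 (eta : R) : R := Qc * (s2 - abar2 eta) / (Bc + 6 * Dc).
Definition fp0 (eta : R) : R := / Bc * (Qc * (s0 - bbar0 eta) - Ac).
Definition fp2 (eta : R) : R := Qc * (s2 - bbar2 eta) / (Bc + 6 * Dc).

Definition f0 (eta : R) : R := if Rlt_dec eta rho then fm0 eta else fp0 eta.
Definition f2 (eta : R) : R := if Rlt_dec eta rho then fm2 eta else fp2 eta.

Definition V_T0 (Rr eps T0 T2 eta : R) : R := - (Bc / Rr) * (T0 - f0 eta).
Definition V_T2 (Rr eps T0 T2 eta : R) : R := - ((Bc + 6 * Dc) / Rr) * (T2 - f2 eta).
Definition V_eta (Rr eps T0 T2 eta : R) : R := eps * (T0 + T2 * p2 eta - Tc).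

Definition dist3 (a0 a1 a2 b0 b1 b2 : R) : R :=
  sqrt ((a0 - b0) ^ 2 + (a1 - b1) ^ 2 + (a2 - b2) ^ 2).

Definition is_solution_on (Rr eps : R) (x0 x1 x2 : R -> R) (Tend : R) : Prop :=
  (forall t, 0 <= t < Tend -> forall e, 0 < e -> exists d, 0 < d /\
     forall u, 0 <= u < Tend -> Rabs (u - t) < d ->
       dist3 (x0 u) (x1 u) (x2 u) (x0 t) (x1 t) (x2 t) < e) /\
  (forall t, 0 < t < Tend ->
     derivable_pt_lim x0 t (V_T0 Rr eps (x0 t) (x1 t) (x2 t)) /\
     derivable_pt_lim x1 t (V_T2 Rr eps (x0 t) (x1 t) (x2 t)) /\
     derivable_pt_lim x2 t (V_eta Rr eps (x0 t) (x1 t) (x2 t))).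

Definition is_global_solution (Rr eps : R) (x0 x1 x2 : R -> R) : Prop :=
  forall Tend, 0 < Tend -> is_solution_on Rr eps x0 x1 x2 Tend.

Definition is_equilibrium (Rr eps a0 a1 a2 : R) : Prop :=
  V_T0 Rr eps a0 a1 a2 = 0 /\ V_T2 Rr eps a0 a1 a2 = 0 /\ V_eta Rr eps a0 a1 a2 = 0.

Definition lyapunov_stable (Rr eps a0 a1 a2 : R) : Prop :=
  forall e, 0 < e -> exists d, 0 < d /\
    forall (x0 x1 x2 : R -> R) (Tend : R), 0 < Tend ->
      is_solution_on Rr eps x0 x1 x2 Tend ->
      dist3 (x0 0) (x1 0) (x2 0) a0 a1 a2 < d ->
      forall t, 0 <= t < Tend -> dist3 (x0 t) (x1 t) (x2 t) a0 a1 a2 < e.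

Definition attractive (Rr eps a0 a1 a2 : R) : Prop :=
  exists d, 0 < d /\
    forall (x0 x1 x2 : R -> R),
      is_global_solution Rr eps x0 x1 x2 ->
      dist3 (x0 0) (x1 0) (x2 0) a0 a1 a2 < d ->
      forall e, 0 < e -> exists T, forall t, T <= t ->
        dist3 (x0 t) (x1 t) (x2 t) a0 a1 a2 < e.

Definition asymptotically_stable_equilibrium (Rr eps a0 a1 a2 : R) : Prop :=
  is_equilibrium Rr eps a0 a1 a2 /\
  lyapunov_stable Rr eps a0 a1 a2 /\ attractive Rr eps a0 a1 a2.

(* Main.v *)
Require Import Defs.
From Stdlib Require Import Reals Lra Psatz Classical.
From Coquelicot Require Import Coquelicot.
Open Scope R_scope.
Definition dfm0 (x:R) := Qc / Bc * (alphai - alpha1) * q0 x.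
Definition dfm2 (x:R) := Qc * 5 * (alphai - alpha1) * q2 x / (Bc + 6*Dc).
Ltac cst := unfold Qc, Bc, Dc, Ac, alpha1, alpha2, alphai, s0, s2, rho, Tc in *.
Lemma d_fm0 x : derivable_pt_lim fm0 x (dfm0 x).
Proof. apply is_derive_Reals. unfold fm0, abar0, int_q0, P0, dfm0, q0, s, p2.
auto_derive. auto. cst. field. Qed.
Lemma d_fm2 x : derivable_pt_lim fm2 x (dfm2 x).
Proof. apply is_derive_Reals. unfold fm2, abar2, int_q2, P2, dfm2, q2, s, p2.
auto_derive. auto. cst. field. Qed.
Lemma b0 x : 19/100 <= x <= 3/10 -> Rabs (dfm0 x) <= 9.
Proof. intros. unfold dfm0, q0, s, p2. cst. apply Rabs_le. split; nra. Qed.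
Lemma t1 x : 19/100 <= x <= 3/10 -> -45/100 <= p2 x <= -36/100.
Proof. intros. unfold p2. split; nra. Qed.
Lemma t2 z : -45/100 <= z <= -36/100 -> Rabs (Qc * 5 * (alphai - alpha1) * ((s0 + s2*z)*z) / (Bc + 6*Dc)) <= 11.
Proof. intros. assert (-55/100 <= (s0+s2*z)*z <= -42/100) by (unfold s0,s2; split; nra).
 set (q := (s0+s2*z)*z) in *. cst. apply Rabs_le. split; lra. Qed.
Definition hf x := fm0 x + fm2 x * p2 x.
Lemma hv1 : 0 < hf (24/100).
Proof. unfold hf, fm0, fm2, abar0, abar2, int_q0, int_q2, P0, P2, p2. cst. lra. Qed.
Lemma hv2 : hf (25/100) < 0.
Proof. unfold hf, fm0, fm2, abar0, abar2, int_q0, int_q2, P0, P2, p2. cst. lra. Qed.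
Lemma fm2v : -4981/100 <= fm2 (19/100) <= -4980/100.
Proof. unfold fm2, abar2, int_q2, P2. cst. lra. Qed.
Lemma core a b eps u v w p d0 d2 H : 0 < eps -> 1000000 * eps <= a -> 1000000*eps <= b ->
  Rabs p <= 1 -> Rabs d0 <= 9 -> Rabs d2 <= 11 -> H * w <= -10 * (w*w) -> Rabs H <= 40 * Rabs w ->
  2*u*(-a*u - d0*(eps*(u+v*p+H))) + 2*v*(-b*v - d2*(eps*(u+v*p+H))) + 2*w*(eps*(u+v*p+H))
   + eps*(u*u+v*v+w*w) <= 0.
Proof.
  intros He Ha Hb Hp H0 H2 Hw HH.
  set (E := u + v*p + H).
  assert (HE : Rabs E <= Rabs u + Rabs v + 40 * Rabs w).
  { unfold E. eapply Rle_trans. apply Rabs_triang. eapply Rle_trans. apply Rplus_le_compat_r. apply Rabs_triang.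
    rewrite Rabs_mult. assert (Rabs v * Rabs p <= Rabs v) by (pose proof (Rabs_pos v); nra). lra. }
  assert (HD : Rabs (d0*u + d2*v) <= 9 * Rabs u + 11 * Rabs v).
  { eapply Rle_trans. apply Rabs_triang. rewrite !Rabs_mult. pose proof (Rabs_pos u); pose proof (Rabs_pos v). nra. }
  assert (HX : - (E * (d0*u+d2*v)) <= (Rabs u + Rabs v + 40 * Rabs w) * (9 * Rabs u + 11 * Rabs v)).
  { eapply Rle_trans. apply Rle_abs. rewrite Rabs_Ropp, Rabs_mult. apply Rmult_le_compat; auto using Rabs_pos. }
  assert (HY : (u + v*p) * w <= Rabs u * Rabs w + Rabs v * Rabs w).
  { eapply Rle_trans. apply Rle_abs. rewrite Rabs_mult. eapply Rle_trans. apply Rmult_le_compat_r. apply Rabs_pos.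
    apply Rabs_triang. rewrite Rabs_mult. assert (0 <= Rabs v * Rabs w) by (apply Rmult_le_pos; apply Rabs_pos); nra. }
  assert (Hsq : u*u = Rabs u * Rabs u /\ v*v = Rabs v*Rabs v /\ w*w = Rabs w*Rabs w).
  { rewrite <- !Rabs_mult. repeat split; symmetry; apply Rabs_right; nra. }
  assert (Q : forall U V W, 0 <= U -> 0 <= V -> 0 <= W ->
     -2000000*U*U - 2000000*V*V + 2*(U*W+V*W) - 20*W*W + 2*((U+V+40*W)*(9*U+11*V)) + (U*U+V*V+W*W) <= 0).
  { intros. pose proof (Rle_0_sqr (3*W - 361/3*U)). pose proof (Rle_0_sqr (3*W - 441/3*V)). pose proof (Rle_0_sqr (U-V)). unfold Rsqr in *. nra. }
  assert (a*(u*u) >= 1000000*eps*(u*u)) by nra.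
  assert (b*(v*v) >= 1000000*eps*(v*v)) by nra.
  pose proof (Q (Rabs u) (Rabs v) (Rabs w) (Rabs_pos _) (Rabs_pos _) (Rabs_pos _)).
  destruct Hsq as [S1 [S2 S3]].
  assert (LHS : 2*u*(-a*u - d0*(eps*E)) + 2*v*(-b*v - d2*(eps*E)) + 2*w*(eps*E) + eps*(u*u+v*v+w*w)
     = -2*(a*(u*u)) - 2*(b*(v*v)) + eps*(2*((u+v*p)*w) + 2*(H*w) + 2*(-(E*(d0*u+d2*v))) + (u*u+v*v+w*w))) by (unfold E; ring).
  rewrite LHS.
  set (Z := 2*((u+v*p)*w) + 2*(H*w) + 2*(-(E*(d0*u+d2*v))) + (u*u+v*v+w*w)).
  assert (Z <= 2000000*(u*u) + 2000000*(v*v)).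
  { unfold Z. rewrite S1, S2, S3 in *. nra. }
  nra.
Qed.
Lemma mvt2 f f' A B x y : (forall c, derivable_pt_lim f c (f' c)) -> A <= x <= B -> A <= y <= B ->
  exists c, A <= c <= B /\ f x - f y = f' c * (x - y).
Proof.
  intros Hd Hx Hy. destruct (Rtotal_order x y) as [Hl|[He|Hg]].
  - destruct (MVT_cor2 f f' x y Hl (fun c _ => Hd c)) as [c [E Hc]].
    exists c. split. lra. replace (f x - f y) with (- (f y - f x)) by ring. rewrite E. ring.
  - subst. exists y. split. lra. ring.
  - destruct (MVT_cor2 f f' y x Hg (fun c _ => Hd c)) as [c [E Hc]].
    exists c. split. lra. exact E.
Qed.
Lemma b0' x : 19/100 <= x <= 3/10 -> 7 <= dfm0 x <= 9.
Proof. intros. unfold dfm0, q0, s, p2. cst. split; nra. Qed.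
Lemma b2' x : 19/100 <= x <= 3/10 -> -11 <= dfm2 x <= -7.
Proof. intros. unfold dfm2, q2, s. pose proof (t1 x H). 
  assert (-55/100 <= (s0+s2*p2 x)*p2 x <= -42/100) by (unfold s0,s2; split; nra).
  set (q := (s0+s2*p2 x)*p2 x) in *. cst. split; lra. Qed.
Definition dh x := dfm0 x + dfm2 x * p2 x + fm2 x * (3*x).
Lemma d_hf x : derivable_pt_lim hf x (dh x).
Proof. unfold dh. replace (dfm0 x + dfm2 x * p2 x + fm2 x * (3*x)) with (dfm0 x + (dfm2 x * p2 x + fm2 x * (3*x))) by ring.
  apply (derivable_pt_lim_plus fm0 (fun x => fm2 x * p2 x)). apply d_fm0.
  apply (derivable_pt_lim_mult fm2 p2). apply d_fm2. apply is_derive_Reals. unfold p2. auto_derive. auto. field. Qed.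
Lemma fm2b x : 19/100 <= x <= 3/10 -> -5103/100 <= fm2 x <= -4980/100.
Proof. intros Hx. destruct (mvt2 fm2 dfm2 (19/100) (3/10) x (19/100) d_fm2 Hx) as [c [Hc E]]. lra.
  pose proof (b2' c Hc). pose proof fm2v. nra. Qed.
Lemma dhb x : 19/100 <= x <= 3/10 -> -40 <= dh x <= -10.
Proof. intros Hx. pose proof (b0' x Hx). pose proof (b2' x Hx). pose proof (fm2b x Hx). pose proof (t1 x Hx).
  unfold dh. split; nra. Qed.
Definition Lf (es : R) (x0 x1 x2 : R -> R) (t : R) :=
  (x0 t - fm0 (x2 t)) * (x0 t - fm0 (x2 t)) + (x1 t - fm2 (x2 t)) * (x1 t - fm2 (x2 t))
  + (x2 t - es) * (x2 t - es).
Lemma Lf_pos es x0 x1 x2 t : 0 <= Lf es x0 x1 x2 t.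
Proof. unfold Lf. pose proof (Rle_0_sqr (x0 t - fm0 (x2 t))). pose proof (Rle_0_sqr (x1 t - fm2 (x2 t))). pose proof (Rle_0_sqr (x2 t - es)). unfold Rsqr in *. lra. Qed.
Lemma dL es x0 x1 x2 t D0 D1 D2 : derivable_pt_lim x0 t D0 -> derivable_pt_lim x1 t D1 ->
  derivable_pt_lim x2 t D2 -> derivable_pt_lim (Lf es x0 x1 x2) t
  (2*(x0 t - fm0 (x2 t))*(D0 - dfm0 (x2 t)*D2) + 2*(x1 t - fm2 (x2 t))*(D1 - dfm2 (x2 t)*D2)
   + 2*(x2 t - es)*D2).
Proof.
  intros H0 H1 H2.
  assert (Hu : derivable_pt_lim (fun t => x0 t - fm0 (x2 t)) t (D0 - dfm0 (x2 t) * D2)).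
  { apply (derivable_pt_lim_minus x0 (fun t => fm0 (x2 t))). exact H0.
    apply (derivable_pt_lim_comp x2 fm0). exact H2. apply d_fm0. }
  assert (Hv : derivable_pt_lim (fun t => x1 t - fm2 (x2 t)) t (D1 - dfm2 (x2 t) * D2)).
  { apply (derivable_pt_lim_minus x1 (fun t => fm2 (x2 t))). exact H1.
    apply (derivable_pt_lim_comp x2 fm2). exact H2. apply d_fm2. }
  assert (Hw : derivable_pt_lim (fun t => x2 t - es) t (D2 - 0)).
  { apply (derivable_pt_lim_minus x2 (fun _ => es)). exact H2. apply derivable_pt_lim_const. }
  pose proof (derivable_pt_lim_plus _ _ _ _ _
     (derivable_pt_lim_plus _ _ _ _ _ (derivable_pt_lim_mult _ _ _ _ _ Hu Hu) (derivable_pt_lim_mult _ _ _ _ _ Hv Hv))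
     (derivable_pt_lim_mult _ _ _ _ _ Hw Hw)) as H.
  match type of H with derivable_pt_lim _ _ ?l => replace (2*(x0 t - fm0 (x2 t))*(D0 - dfm0 (x2 t)*D2) + 2*(x1 t - fm2 (x2 t))*(D1 - dfm2 (x2 t)*D2)
   + 2*(x2 t - es)*D2) with l by ring end.
  exact H.
Qed.
Lemma region es y : 24/100 <= es <= 25/100 -> hf es = 0 -> Rabs (y - es) < 1/20 ->
  0 < y < rho /\ Rabs (p2 y) <= 1 /\ Rabs (dfm0 y) <= 9 /\ Rabs (dfm2 y) <= 11 /\
  hf y * (y - es) <= -10 * ((y - es)*(y-es)) /\ Rabs (hf y) <= 40 * Rabs (y - es) /\
  Rabs (fm0 y - fm0 es) <= 9 * Rabs (y - es) /\ Rabs (fm2 y - fm2 es) <= 11 * Rabs (y - es).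
Proof.
  intros He Hh Hy. apply Rabs_def2 in Hy.
  assert (Y : 19/100 <= y <= 3/10) by lra. assert (E : 19/100 <= es <= 3/10) by lra.
  destruct (mvt2 hf dh _ _ y es d_hf Y E) as [c [Hc Ec]]. rewrite Hh, Rminus_0_r in Ec.
  destruct (mvt2 fm0 dfm0 _ _ y es d_fm0 Y E) as [c0 [Hc0 E0]].
  destruct (mvt2 fm2 dfm2 _ _ y es d_fm2 Y E) as [c2 [Hc2 E2]].
  pose proof (dhb c Hc). pose proof (b0 c0 Hc0). assert (Rabs (dfm2 c2) <= 11) by (apply Rabs_le; pose proof (b2' c2 Hc2); lra). pose proof (t1 y Y).
  split. unfold rho. lra. split. apply Rabs_le. lra. split. apply b0; auto. split. apply Rabs_le; pose proof (b2' y Y); lra.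
  split. rewrite Ec, Rmult_assoc. apply Rmult_le_compat_r. exact (Rle_0_sqr _). lra.
  split. rewrite Ec, Rabs_mult. apply Rmult_le_compat_r. apply Rabs_pos. apply Rabs_le. lra.
  split. rewrite E0, Rabs_mult. apply Rmult_le_compat_r. apply Rabs_pos. auto.
  rewrite E2, Rabs_mult. apply Rmult_le_compat_r. apply Rabs_pos. auto.
Qed.
Lemma f0_m y : y < rho -> f0 y = fm0 y.
Proof. intros. unfold f0. destruct (Rlt_dec y rho); [reflexivity|lra]. Qed.
Lemma f2_m y : y < rho -> f2 y = fm2 y.
Proof. intros. unfold f2. destruct (Rlt_dec y rho); [reflexivity|lra]. Qed.
Definition LD Rr eps es (x0 x1 x2 : R -> R) t :=
  let D0 := V_T0 Rr eps (x0 t) (x1 t) (x2 t) in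
  let D1 := V_T2 Rr eps (x0 t) (x1 t) (x2 t) in
  let D2 := V_eta Rr eps (x0 t) (x1 t) (x2 t) in
  2*(x0 t - fm0 (x2 t))*(D0 - dfm0 (x2 t)*D2) + 2*(x1 t - fm2 (x2 t))*(D1 - dfm2 (x2 t)*D2)
   + 2*(x2 t - es)*D2.
Lemma w_small es x0 x1 x2 t : Lf es x0 x1 x2 t < 1/400 -> Rabs (x2 t - es) < 1/20.
Proof. intros H. unfold Lf in H. pose proof (Rle_0_sqr (x0 t - fm0 (x2 t))). pose proof (Rle_0_sqr (x1 t - fm2 (x2 t))).
  unfold Rsqr in *. apply Rabs_def1; nra. Qed.
Lemma LDneg Rr eps es x0 x1 x2 t : 0 < Rr -> 0 < eps -> 1000000*eps <= Bc/Rr ->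
  24/100 <= es <= 25/100 -> hf es = 0 -> Lf es x0 x1 x2 t < 1/400 ->
  LD Rr eps es x0 x1 x2 t + eps * Lf es x0 x1 x2 t <= 0.
Proof.
  intros HR He HK Hes Hh HL.
  pose proof (w_small _ _ _ _ _ HL) as Hw.
  destruct (region es (x2 t) Hes Hh Hw) as [Hy [Hp [Hd0 [Hd2 [Hhw [HH _]]]]]].
  assert (Hb : 1000000*eps <= (Bc + 6*Dc)/Rr).
  { eapply Rle_trans. exact HK. unfold Rdiv. apply Rmult_le_compat_r. left; apply Rinv_0_lt_compat; auto. unfold Dc; lra. }
  pose proof (core (Bc/Rr) ((Bc+6*Dc)/Rr) eps (x0 t - fm0 (x2 t)) (x1 t - fm2 (x2 t)) (x2 t - es) (p2 (x2 t))
     (dfm0 (x2 t)) (dfm2 (x2 t)) (hf (x2 t)) He HK Hb Hp Hd0 Hd2 Hhw HH) as C.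
  unfold LD, Lf, V_T0, V_T2, V_eta. rewrite f0_m, f2_m by lra. unfold hf, Tc in *.
  eapply Rle_trans; [| exact C]. right. unfold Rdiv. ring.
Qed.
From Stdlib Require Import Classical.
Lemma lin_d eps c1 t : derivable_pt_lim (fun t => 1 + eps*(t-c1)) t eps.
Proof. apply is_derive_Reals. auto_derive. auto. ring. Qed.
Lemma decay Rr eps es x0 x1 x2 Tend c1 : 0 < Rr -> 0 < eps -> 1000000*eps <= Bc/Rr ->
  24/100 <= es <= 25/100 -> hf es = 0 -> is_solution_on Rr eps x0 x1 x2 Tend ->
  0 < c1 < Tend -> Lf es x0 x1 x2 c1 < 1/400 ->
  forall t1, c1 <= t1 < Tend -> Lf es x0 x1 x2 t1 * (1 + eps*(t1-c1)) <= Lf es x0 x1 x2 c1.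
Proof.
  intros HR He HK Hes Hh [_ Hsol] Hc1 HL0 t1 Ht1.
  set (L := Lf es x0 x1 x2) in *.
  set (G := fun t => L t * (1 + eps*(t-c1))).
  set (GD := fun t => LD Rr eps es x0 x1 x2 t * (1 + eps*(t-c1)) + L t * eps).
  assert (dLt : forall t, 0 < t < Tend -> derivable_pt_lim L t (LD Rr eps es x0 x1 x2 t)).
  { intros t Ht. destruct (Hsol t Ht) as [A [B C]]. unfold L, LD. apply dL; auto. }
  assert (dG : forall t, 0 < t < Tend -> derivable_pt_lim G t (GD t)).
  { intros t Ht. unfold G, GD. apply (derivable_pt_lim_mult L (fun t => 1 + eps*(t-c1))). auto. apply lin_d. }
  assert (cL : forall t, 0 < t < Tend -> continuity_pt L t).
  { intros t Ht. apply derivable_continuous_pt. exists (LD Rr eps es x0 x1 x2 t). apply dLt; exact Ht. }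
  assert (nG : forall t, c1 <= t < Tend -> L t < 1/400 -> GD t <= 0).
  { intros t Ht HLt. pose proof (LDneg Rr eps es x0 x1 x2 t HR He HK Hes Hh HLt). unfold GD.
    pose proof (Lf_pos es x0 x1 x2 t). fold L in H, H0.
    assert (0 <= eps*(t-c1)) by (apply Rmult_le_pos; lra).
    assert (0 <= eps * ((eps*(t-c1)) * L t)) by (apply Rmult_le_pos; [lra| apply Rmult_le_pos; lra]).
    assert ((1 + eps*(t-c1)) * (LD Rr eps es x0 x1 x2 t + eps * L t) <= 0).
    { rewrite <- (Rmult_0_r (1+eps*(t-c1))). apply Rmult_le_compat_l; lra. }
    lra. }
  assert (mono : forall b, c1 < b < Tend -> (forall s, c1 < s < b -> L s < 1/400) -> G b <= G c1).
  { intros b Hb Hs.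
    assert (HD : forall c, c1 <= c <= b -> derivable_pt_lim G c (GD c)) by (intros c Hc; apply dG; lra).
    destruct (MVT_cor2 G GD c1 b (proj1 Hb) HD) as [c [E Hc]].
    assert (GD c <= 0) by (apply nG; [lra| apply Hs; lra]).
    assert (GD c * (b - c1) <= 0) by nra.
    lra. }
  assert (Gc1 : G c1 = L c1) by (unfold G; ring).
  set (Bs := fun t => c1 <= t <= t1 /\ forall s, c1 <= s <= t -> L s < 1/400).
  assert (Bc1 : Bs c1) by (split; [lra| intros s Hs; replace s with c1 by lra; exact HL0]).
  assert (Bb : bound Bs) by (exists t1; intros t [Hq _]; lra).
  destruct (completeness Bs Bb (ex_intro _ c1 Bc1)) as [tau [Hub Hlub]].
  assert (Hct : c1 <= tau) by (apply Hub; exact Bc1).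
  assert (Htt : tau <= t1) by (apply Hlub; intros t [Hq _]; lra).
  assert (A : forall s, c1 <= s < tau -> L s < 1/400).
  { intros s Hs. destruct (classic (exists t, Bs t /\ s < t)) as [[t [[Ht Hall] Hst]] | Hn].
    - apply Hall; lra.
    - exfalso. assert (Hu : is_upper_bound Bs s).
      { intros t Ht. apply Rnot_lt_le. intro. apply Hn. eauto. }
      apply Hlub in Hu. lra. }
  assert (Gt : G tau <= G c1).
  { destruct (Req_dec tau c1) as [E|E]. rewrite E; lra. apply mono. lra. intros; apply A; lra. }
  assert (Ltau : L tau < 1/400).
  { unfold G in Gt, Gc1. rewrite Gc1 in Gt. pose proof (Lf_pos es x0 x1 x2 tau) as Hp. fold L in Hp.
    assert (0 <= eps*(tau - c1)) by (apply Rmult_le_pos; lra). nra. }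
  assert (Et : tau = t1).
  { destruct (Req_dec tau t1) as [E|E]; auto. exfalso.
    destruct (cL tau ltac:(lra) (1/400 - L tau) ltac:(lra)) as [r [Hr Hcont]].
    set (t' := Rmin (tau + r/2) t1).
    assert (Ht' : tau < t' <= t1).
    { split. apply Rmin_glb_lt; lra. apply Rmin_r. }
    assert (HB : Bs t').
    { split. lra.
      intros s Hs. destruct (Rlt_le_dec s tau). apply A; lra.
      destruct (Req_dec s tau) as [Es|Es]. rewrite Es; exact Ltau.
      assert (Hd : R_dist (L s) (L tau) < 1/400 - L tau).
      { apply Hcont. split. split. exact I. auto.
        assert (t' <= tau + r/2) by apply Rmin_l.
        simpl. unfold R_dist. apply Rabs_def1; lra. }
      unfold R_dist in Hd. apply Rabs_def2 in Hd. lra. }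
    apply Hub in HB. lra. }
  rewrite Et in Gt. unfold G in Gt. rewrite <- Gc1. exact Gt.
Qed.
Lemma comp_le a0 a1 a2 b0 b1 b2 :
  Rabs (a0 - b0) <= dist3 a0 a1 a2 b0 b1 b2 /\ Rabs (a1 - b1) <= dist3 a0 a1 a2 b0 b1 b2 /\
  Rabs (a2 - b2) <= dist3 a0 a1 a2 b0 b1 b2.
Proof.
  unfold dist3. pose proof (pow2_ge_0 (a0-b0)); pose proof (pow2_ge_0 (a1-b1)); pose proof (pow2_ge_0 (a2-b2)).
  repeat split; rewrite <- sqrt_Rsqr_abs; apply sqrt_le_1_alt; unfold Rsqr; simpl; lra.
Qed.
Lemma dist_lt a0 a1 a2 b0 b1 b2 e : 0 < e ->
  (a0 - b0)*(a0-b0) + (a1-b1)*(a1-b1) + (a2-b2)*(a2-b2) < e*e -> dist3 a0 a1 a2 b0 b1 b2 < e.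
Proof.
  intros He H. unfold dist3. rewrite <- (sqrt_square e) by lra. apply sqrt_lt_1_alt. split.
  pose proof (pow2_ge_0 (a0-b0)); pose proof (pow2_ge_0 (a1-b1)); pose proof (pow2_ge_0 (a2-b2)). lra.
  simpl. lra.
Qed.
Lemma R1 es x0 x1 x2 t r : 24/100 <= es <= 25/100 -> hf es = 0 -> r <= 1/20 ->
  Rabs (x0 t - fm0 es) < r -> Rabs (x1 t - fm2 es) < r -> Rabs (x2 t - es) < r ->
  Lf es x0 x1 x2 t <= 250 * (r*r).
Proof.
  intros Hes Hh Hr H0 H1 H2.
  destruct (region es (x2 t) Hes Hh ltac:(lra)) as [_ [_ [_ [_ [_ [_ [L0 L2]]]]]]].
  assert (U : Rabs (x0 t - fm0 (x2 t)) <= 10 * r).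
  { replace (x0 t - fm0 (x2 t)) with ((x0 t - fm0 es) - (fm0 (x2 t) - fm0 es)) by ring.
    eapply Rle_trans. apply Rabs_triang. rewrite Rabs_Ropp. lra. }
  assert (V : Rabs (x1 t - fm2 (x2 t)) <= 12 * r).
  { replace (x1 t - fm2 (x2 t)) with ((x1 t - fm2 es) - (fm2 (x2 t) - fm2 es)) by ring.
    eapply Rle_trans. apply Rabs_triang. rewrite Rabs_Ropp. lra. }
  unfold Lf.
  assert (forall z, z * z = Rabs z * Rabs z) as Sq.
  { intro z. rewrite <- Rabs_mult. symmetry. apply Rabs_right. pose proof (Rle_0_sqr z). unfold Rsqr in *. lra. }
  rewrite (Sq (x0 t - _)), (Sq (x1 t - _)), (Sq (x2 t - _)).
  pose proof (Rabs_pos (x0 t - fm0 (x2 t))). pose proof (Rabs_pos (x1 t - fm2 (x2 t))). pose proof (Rabs_pos (x2 t - es)).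
  assert (Rabs (x0 t - fm0 (x2 t)) * Rabs (x0 t - fm0 (x2 t)) <= (10*r)*(10*r)) by (apply Rmult_le_compat; lra).
  assert (Rabs (x1 t - fm2 (x2 t)) * Rabs (x1 t - fm2 (x2 t)) <= (12*r)*(12*r)) by (apply Rmult_le_compat; lra).
  assert (Rabs (x2 t - es) * Rabs (x2 t - es) <= r*r) by (apply Rmult_le_compat; lra).
  nra.
Qed.
Lemma R2 es x0 x1 x2 t : 24/100 <= es <= 25/100 -> hf es = 0 -> Lf es x0 x1 x2 t < 1/400 ->
  (x0 t - fm0 es)*(x0 t - fm0 es) + (x1 t - fm2 es)*(x1 t - fm2 es) + (x2 t - es)*(x2 t - es)
   <= 405 * Lf es x0 x1 x2 t.
Proof.
  intros Hes Hh HL.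
  destruct (region es (x2 t) Hes Hh (w_small _ _ _ _ _ HL)) as [_ [_ [_ [_ [_ [_ [L0 L2]]]]]]].
  set (u := x0 t - fm0 (x2 t)) in *. set (v := x1 t - fm2 (x2 t)) in *. set (w := x2 t - es) in *.
  set (A := fm0 (x2 t) - fm0 es) in *. set (B := fm2 (x2 t) - fm2 es) in *.
  replace (x0 t - fm0 es) with (u + A) by (unfold u, A; ring).
  replace (x1 t - fm2 es) with (v + B) by (unfold v, B; ring).
  unfold Lf. fold u v w.
  assert (forall z, z * z = Rabs z * Rabs z) as Sq.
  { intro z. rewrite <- Rabs_mult. symmetry. apply Rabs_right. pose proof (Rle_0_sqr z). unfold Rsqr in *. lra. }
  assert (A*A <= 81*(w*w)).
  { rewrite (Sq A), (Sq w). pose proof (Rabs_pos A). pose proof (Rabs_pos w).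
    replace (81 * (Rabs w * Rabs w)) with ((9*Rabs w)*(9*Rabs w)) by ring. apply Rmult_le_compat; lra. }
  assert (B*B <= 121*(w*w)).
  { rewrite (Sq B), (Sq w). pose proof (Rabs_pos B). pose proof (Rabs_pos w).
    replace (121 * (Rabs w * Rabs w)) with ((11*Rabs w)*(11*Rabs w)) by ring. apply Rmult_le_compat; lra. }
  pose proof (Rle_0_sqr (u - A)). pose proof (Rle_0_sqr (v - B)). pose proof (Rle_0_sqr u). pose proof (Rle_0_sqr v).
  unfold Rsqr in *. nra.
Qed.
Lemma es_ex : exists es, 24/100 <= es <= 25/100 /\ hf es = 0.
Proof.
  destruct (IVT (fun x => - hf x) (24/100) (25/100)) as [z [Hz Ez]].
  - intros x. assert (H : continuity_pt hf x).
    { apply derivable_continuous_pt. exists (dh x). apply d_hf. }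
    exact (continuity_pt_opp hf x H).
  - lra.
  - pose proof hv1. lra.
  - pose proof hv2. lra.
  - exists z. split; auto. lra.
Qed.
Lemma tri3 a b c : Rabs (a - c) <= Rabs (a - b) + Rabs (b - c).
Proof. replace (a - c) with ((a - b) + (b - c)) by ring. apply Rabs_triang. Qed.
Lemma start Rr eps es x0 x1 x2 Tend tm d lam : 24/100 <= es <= 25/100 -> hf es = 0 ->
  is_solution_on Rr eps x0 x1 x2 Tend -> 0 < tm <= Tend -> 0 < d -> d <= 1/40 -> d <= lam/2000 ->
  dist3 (x0 0) (x1 0) (x2 0) (fm0 es) (fm2 es) es < d ->
  exists c1, 0 < c1 < tm /\ Lf es x0 x1 x2 c1 < lam.
Proof.
  intros Hes Hh [Hc _] Htm Hd Hd1 Hd2 Hd0.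
  destruct (Hc 0 ltac:(lra) d Hd) as [dc [Hdc Hcl]].
  set (c1 := Rmin tm dc / 2).
  assert (Hm : 0 < Rmin tm dc) by (apply Rmin_glb_lt; lra).
  pose proof (Rmin_l tm dc). pose proof (Rmin_r tm dc).
  assert (Hc1 : 0 < c1 < tm) by (unfold c1; lra).
  assert (D1 : dist3 (x0 c1) (x1 c1) (x2 c1) (x0 0) (x1 0) (x2 0) < d).
  { apply Hcl. lra. rewrite Rminus_0_r, Rabs_right by lra. unfold c1; lra. }
  destruct (comp_le (x0 c1) (x1 c1) (x2 c1) (x0 0) (x1 0) (x2 0)) as [A0 [A1 A2]].
  destruct (comp_le (x0 0) (x1 0) (x2 0) (fm0 es) (fm2 es) es) as [B0 [B1 B2]].
  pose proof (tri3 (x0 c1) (x0 0) (fm0 es)). pose proof (tri3 (x1 c1) (x1 0) (fm2 es)).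
  pose proof (tri3 (x2 c1) (x2 0) es).
  pose proof (R1 es x0 x1 x2 c1 (2*d) Hes Hh ltac:(lra) ltac:(lra) ltac:(lra) ltac:(lra)).
  exists c1. split. exact Hc1.
  assert (d * d <= d * (lam/2000)) by (apply Rmult_le_compat_l; lra).
  assert (d * (lam/2000) <= (1/40)*(lam/2000)) by (apply Rmult_le_compat_r; lra).
  nra.
Qed.
Theorem proposition4 :
  forall Rr : R, 0 < Rr ->
  exists eps0 : R, 0 < eps0 /\
    forall eps : R, 0 < eps < eps0 ->
      exists T0s T2s etas : R,
        0 < etas < rho /\
        asymptotically_stable_equilibrium Rr eps T0s T2s etas.
Proof.
  intros Rr HR.
  destruct es_ex as [es [Hes Hh]].
  assert (HB : 0 < Bc / Rr) by (unfold Rdiv; apply Rmult_lt_0_compat; [unfold Bc; lra | apply Rinv_0_lt_compat; lra]).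
  exists (Bc / Rr / 1000000). split. lra.
  intros eps [He He0].
  assert (HK : 1000000 * eps <= Bc / Rr) by lra.
  exists (fm0 es), (fm2 es), es. split. unfold rho; lra.
  split; [|split].
  -
    unfold is_equilibrium, V_T0, V_T2, V_eta. rewrite f0_m, f2_m by (unfold rho; lra).
    unfold hf, Tc in *. repeat split; try ring. rewrite Rminus_0_r, Hh. ring.
  -
    intros e He'.
    set (lam := Rmin (1/400) (e*e/810)).
    assert (Hlam : 0 < lam) by (apply Rmin_glb_lt; nra).
    assert (Hl1 : lam <= 1/400) by apply Rmin_l. assert (Hl2 : lam <= e*e/810) by apply Rmin_r.
    set (d := Rmin (Rmin (1/40) (lam/2000)) e).
    assert (Hd : 0 < d) by (apply Rmin_glb_lt; [apply Rmin_glb_lt|]; lra).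
    assert (Hd1 : d <= Rmin (1/40) (lam/2000)) by apply Rmin_l. assert (Hde : d <= e) by apply Rmin_r.
    pose proof (Rmin_l (1/40) (lam/2000)). pose proof (Rmin_r (1/40) (lam/2000)).
    exists d. split. exact Hd.
    intros x0 x1 x2 Tend HT Hsol Hd0 t Ht.
    destruct (Req_dec t 0) as [Et|Et].
    { rewrite Et. lra. }
    destruct (start Rr eps es x0 x1 x2 Tend t d lam Hes Hh Hsol ltac:(lra) Hd ltac:(lra) ltac:(lra) Hd0)
      as [c1 [Hc1 HL1]].
    pose proof (decay Rr eps es x0 x1 x2 Tend c1 HR He HK Hes Hh Hsol ltac:(lra) ltac:(lra) t ltac:(lra)) as Dc.
    pose proof (Lf_pos es x0 x1 x2 t).
    assert (0 <= eps * (t - c1)) by (apply Rmult_le_pos; lra).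
    assert (HLt : Lf es x0 x1 x2 t <= Lf es x0 x1 x2 c1) by nra.
    pose proof (R2 es x0 x1 x2 t Hes Hh ltac:(lra)).
    apply dist_lt. exact He'. nra.
  -
    exists (Rmin (1/40) (1/800000)). split. apply Rmin_glb_lt; lra.
    intros x0 x1 x2 Hglob Hd0 e He'.
    pose proof (Rmin_l (1/40) (1/800000)). pose proof (Rmin_r (1/40) (1/800000)).
    destruct (start Rr eps es x0 x1 x2 1 1 (Rmin (1/40) (1/800000)) (1/400) Hes Hh (Hglob 1 ltac:(lra))
       ltac:(lra) ltac:(apply Rmin_glb_lt; lra) ltac:(lra) ltac:(lra) Hd0) as [c1 [Hc1 HL1]].
    exists (c1 + 405 / (400 * eps * (e*e))).
    intros t Ht.
    assert (Hq : 0 < 405 / (400 * eps * (e*e))).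
    { unfold Rdiv. apply Rmult_lt_0_compat. lra. apply Rinv_0_lt_compat. apply Rmult_lt_0_compat. lra. nra. }
    pose proof (decay Rr eps es x0 x1 x2 (t+1) c1 HR He HK Hes Hh (Hglob (t+1) ltac:(lra)) ltac:(lra) HL1 t ltac:(lra)) as Dc.
    pose proof (Lf_pos es x0 x1 x2 t).
    assert (E1 : 405 / (400 * (e*e)) <= eps * (t - c1)).
    { assert (405 / (400 * (e*e)) = eps * (405 / (400 * eps * (e*e)))) by (field; split; nra).
      rewrite H2. apply Rmult_le_compat_l; lra. }
    assert (Hee : 0 < e*e) by nra.
    assert (Hf : 0 < 405 / (400 * (e*e))) by (unfold Rdiv; apply Rmult_lt_0_compat; [lra| apply Rinv_0_lt_compat; lra]).
    assert (Hp1 : 0 <= Lf es x0 x1 x2 t * (eps*(t-c1))) by (apply Rmult_le_pos; lra).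
    assert (HLt : Lf es x0 x1 x2 t <= Lf es x0 x1 x2 c1) by (rewrite Rmult_plus_distr_l, Rmult_1_r in Dc; lra).
    pose proof (R2 es x0 x1 x2 t Hes Hh ltac:(lra)).
    assert (Lf es x0 x1 x2 t * (405 / (400 * (e*e))) <= Lf es x0 x1 x2 t * (eps*(t-c1))) by (apply Rmult_le_compat_l; lra).
    assert (H5 : Lf es x0 x1 x2 t * (405 / (400 * (e*e))) < 1/400) by (rewrite Rmult_plus_distr_l, Rmult_1_r in Dc; lra).
    assert (405 * Lf es x0 x1 x2 t < e * e).
    { assert (H6 : Lf es x0 x1 x2 t * (405 / (400 * (e*e))) * (400 * (e*e)) < 1/400 * (400*(e*e))).
      { apply Rmult_lt_compat_r. nra. exact H5. }
      replace (Lf es x0 x1 x2 t * (405 / (400 * (e*e))) * (400 * (e*e))) with (405 * Lf es x0 x1 x2 t) in H6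
        by (field; nra). lra. }
    apply dist_lt. exact He'. lra.
Qed.
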